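(* Let $a\in\overline{\mathbb{F}}_2^*$ and let $n>1$ be an odd integer. Then: (i) $0$ is the unique critical value of $X^n$, and $\mathcal{R}_{X^n}(0)=[n]$, where $0$ is the unique root of $X^n$; (ii) $0$ is the unique critical value of $f(X):=D_n(X,a)$, and $\mathcal{R}_f(0)$ consists of one $1$ and $(n-1)/2$ copies of $2$, where $0$ is the unique root of $f(X)$ with ramification index $1$.
   Context: For a field $K$, $a\in K$ and positive integer $n$, the Dickson polynomial $D_n(X,a)\in K[X]$ is the unique polynomial with $D_n(X+a/X,a)=X^n+a^n/X^n$; explicitly $D_n(X,a)=\sum_{i=0}^{\lfloor n/2\rfloor}\frac{n}{n-i}\binom{n-i}{i}(-a)^iX^{n-2i}$. For nonconstant $f(X)\in K[X]$, a critical point is $c\in\overline{K}$ with $f'(c)=0$, and a critical value is $f(c)$ for a critical point $c$. The ramification index $e_f(c)$ is the multiplicity of $c$ as a root of $f(X)-f(c)$, and the ramification multiset $\mathcal{R}_f(d)$ for $d\in\overline{K}$ is the multiset of multiplicities of the roots of $f(X)-d$ in $\overline{K}$. *)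

(* Defs.v *)
From HB Require Import structures.
From mathcomp Require Import all_boot all_order all_algebra.
Set Implicit Arguments. Unset Strict Implicit. Unset Printing Implicit Defensive.
Import GRing.Theory.
Local Open Scope ring_scope.

(* The rational coefficient n/(n-i) C(n-i,i) is an integer; we compute it in
   nat as (n * C(n-i,i)) %/ (n-i) (exact division) and cast it into K. *)
Definition dickson (K : nzRingType) (n : nat) (a : K) : {poly K} :=
  \sum_(i < n./2.+1)
     (((n * 'C(n - i, i)) %/ (n - i))%N%:R * (- a) ^+ i) *: 'X^(n - 2 * i).

Definition is_critical_value (K : nzRingType) (f : {poly K}) (d : K) : Prop :=
  exists c : K, (f^`()).[c] = 0 /\ f.[c] = d.

Definition ram_index (K : fieldType) (f : {poly K}) (c : K) : nat :=
  mup c (f - (f.[c])%:P).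

(* m represents (as a multiset, i.e. up to permutation) the ramification
   multiset R_f(d): the multiplicities of the (distinct) roots of f(X) - d. *)
Definition is_ram_mset (K : fieldType) (f : {poly K}) (d : K) (m : seq nat)
  : Prop :=
  exists s : seq K,
    [/\ uniq s,
        (forall c, root (f - d%:P) c = (c \in s)) &
        perm_eq [seq mup c (f - d%:P) | c <- s] m].

(* K is algebraic over its prime field F_2 = {0,1} (K of characteristic 2). *)
Definition algebraic_over_F2 (K : nzRingType) : Prop :=
  forall x : K, exists p : {poly K},
    [/\ p != 0, all (fun c => (c == 0) || (c == 1)) p & root p x].

(* Main.v *)
Require Import Defs.
From HB Require Import structures.
From mathcomp Require Import all_boot all_order all_algebra all_field all_solvable.
From mathcomp Require Import zify ring.
Set Implicit Arguments. Unset Strict Implicit. Unset Printing Implicit Defensive.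
Import GRing.Theory.
Local Open Scope ring_scope.

Local Open Scope nat_scope.
Definition cD (n i : nat) : nat := (n * 'C(n - i, i)) %/ (n - i).
Definition cc (p j : nat) : nat := if j is j'.+1 then 'C(p, j) + 'C(p.-1, j') else 1.

Lemma cDE p j : 0 < p -> cD (p + j) j = cc p j.
Proof.
move=> p0; rewrite /cD addnK; case: j => [|j] /=.
  by rewrite bin0 muln1 addn0 divnn p0.
have -> : (p + j.+1) * 'C(p, j.+1) = p * ('C(p, j.+1) + 'C(p.-1, j)).
  by rewrite mulnDl mulnDr mul_bin_diag.
by rewrite mulKn.
Qed.

Lemma cD0 m i : m < i.*2 -> cD m i = 0.
Proof. by move=> h; rewrite /cD bin_small ?muln0 ?div0n //; lia. Qed.

Lemma cD_0 m : 0 < m -> cD m 0 = 1.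
Proof. by move=> h; rewrite -[m]addn0 cDE. Qed.

Lemma cD_rec n i : 0 < n -> cD n.+2 i.+1 = cD n.+1 i.+1 + cD n i.
Proof.
move=> n0; case: (leqP i.*2 n) => hi; last first.
  by rewrite !cD0 //; lia.
have [k [-> k0 ik]] : exists k, [/\ n = k + i, 0 < k & i <= k].
  by exists (n - i); split; lia.
clear hi n0.
have -> : (k + i).+2 = k.+1 + i.+1 by lia.
have -> : (k + i).+1 = k + i.+1 by lia.
rewrite !cDE //; case: k k0 ik => [//|k] _ ik /=.
case: i ik => [|i] ik /=; first by rewrite !bin1 !bin0; lia.
rewrite !binS; lia.
Qed.

Local Open Scope ring_scope.

Section Rec.
Variable K : fieldType.
Variable a : K.

Lemma D_wide n N : (n./2 < N)%N ->
  dickson n a = \sum_(i < N) ((cD n i)%:R * (- a) ^+ i) *: 'X^(n - 2 * i).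
Proof.
move=> hN; rewrite /dickson (big_ord_widen _ (fun i => ((cD n i)%:R * (- a) ^+ i) *: 'X^(n - 2 * i)) hN).
rewrite big_mkcond /=; apply: eq_bigr => i _; case: ifP => // /negbT.
rewrite -leqNgt => hi; rewrite cD0 ?mul0r ?scale0r //.
have := odd_double_half n; lia.
Qed.

Lemma D_rec n : (0 < n)%N ->
  dickson n.+2 a = 'X * dickson n.+1 a - a *: dickson n a.
Proof.
move=> n0.
rewrite (@D_wide n.+2 n.+2) ?(@D_wide n.+1 n.+2) ?(@D_wide n n.+1); first last.
- have := odd_double_half n; lia.
- have := odd_double_half n.+1; lia.
- have := odd_double_half n.+2; lia.
rewrite big_ord_recl [in RHS]big_ord_recl mulrDr -addrA mulr_sumr scaler_sumr -sumrB.
congr (_ + _).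
  rewrite !cD_0 // !expr0 !mulr1 !subn0 !scale1r.
  by rewrite exprS.
apply: eq_big => // i _ /=.
rewrite /bump /= !add1n cD_rec // natrD.
case: (ltnP (2 * i) n) => hi.
  have -> : (n.+2 - 2 * i.+1 = n - 2 * i)%N by lia.
  have -> : (n - 2 * i = (n.+1 - 2 * i.+1).+1)%N by lia.
  rewrite -scalerAr -exprS scalerA -scalerBl; congr (_ *: _).
  rewrite exprS; ring.
rewrite (@cD0 n.+1 i.+1); last by lia.
have -> : (n.+2 - 2 * i.+1 = n - 2 * i)%N by lia.
rewrite !mul0r !scale0r mulr0 add0r.
rewrite sub0r scalerA -scaleNr; congr (_ *: _); rewrite exprS; ring.
Qed.
End Rec.
Section Eval.
Variable K : fieldType.
Variable a : K.

Lemma D_eval_aux x : x != 0 -> forall n,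
  (dickson n.+1 a).[x + a/x] = x^+n.+1 + (a/x)^+n.+1 /\
  (dickson n.+2 a).[x + a/x] = x^+n.+2 + (a/x)^+n.+2.
Proof.
move=> x0; have hu : a = x * (a / x) by rewrite mulrC divfK.
elim=> [|n [IH1 IH2]].
  rewrite /dickson !big_ord_recl !big_ord0 /= /bump /=.
  rewrite (_ : ((1 * 'C(1 - 0, 0)) %/ (1 - 0))%N = 1%N) //.
  rewrite (_ : ((2 * 'C(2 - 0, 0)) %/ (2 - 0))%N = 1%N) //.
  rewrite (_ : ((2 * 'C(2 - 1, 1)) %/ (2 - 1))%N = 2%N) //.
  rewrite !hornerE /=; move: (a / x) hu => u ->; split; ring.
split=> //.
rewrite D_rec //.
rewrite hornerD hornerN hornerZ mulrC hornerMX IH1 IH2.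
move: (a / x) hu => u ->; rewrite !exprS; ring.
Qed.

Lemma D_eval n x : x != 0 -> (0 < n)%N ->
  (dickson n a).[x + a/x] = x^+n + (a/x)^+n.
Proof. by move=> x0; case: n => // n _; case: (D_eval_aux x0 n). Qed.
End Eval.

Section Char2.
Variable K : fieldType.
Hypothesis hchar : (2 \in [pchar K])%N.
Variables a b : K.
Hypothesis hb : b ^+ 2 = a.
Variable m : nat.

Definition gpol : {poly K} :=
  \sum_(i < m.+1) ((cD m.*2.+1 i)%:R * b ^+ i) *: 'X^(m - i).

Lemma natr_sq k : (k%:R : K) ^+ 2 = k%:R.
Proof.
rewrite -natrX -(GRing.natr_mod_pchar hchar) -[in RHS](GRing.natr_mod_pchar hchar).
by rewrite !modn2 oddX.
Qed.

Lemma D_sq : dickson m.*2.+1 a = 'X * gpol ^+ 2.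
Proof.
have hP : (2 \in [pchar {poly K}])%N by rewrite pchar_poly.
rewrite /dickson /= uphalf_double.
have -> : gpol ^+ 2 = pFrobenius_aut hP gpol by rewrite pFrobenius_autE.
rewrite /gpol rmorph_sum mulr_sumr.
apply: eq_bigr => i _.
rewrite /= pFrobenius_autE.
rewrite exprZn -scalerAr -exprM -exprS.
have -> : (m.*2.+1 - 2 * i = ((m - i) * 2).+1)%N by have := ltn_ord i; lia.
congr (_ *: _); rewrite exprMn natr_sq exprAC hb.
by rewrite (GRing.oppr_pchar2 hchar).
Qed.

Lemma gpol_size : size gpol = m.+1 /\ gpol \is monic.
Proof.
rewrite /gpol big_ord_recl cD_0 // mulr1 scale1r subn0.
set r := \sum_(_ < _) _.
have hr : (size r <= m)%N.
  apply: (leq_trans (size_sum _ _ _)); apply/bigmax_leqP => i _.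
  apply: (leq_trans (size_scale_leq _ _)); rewrite size_polyXn /bump /=.
have -> : bump 0 i = i.+1 by []. have := ltn_ord i; lia.
have hs : (size r < size ('X^m : {poly K}))%N by rewrite size_polyXn.
split; first by rewrite size_addl // size_polyXn.
by rewrite monicE lead_coefDl // lead_coefXn.
Qed.
End Char2.

Lemma prim_root_exists (K : closedFieldType) n : (n > 0)%N -> n%:R != 0 :> K ->
  exists z : K, n.-primitive_root z.
Proof.
move=> n_gt0 nz.
pose p : {poly K} := 'X^n - 1; have [r Dp] := closed_field_poly_normal p.
rewrite (monicP _) ?monicXnsubC // scale1r in Dp.
have rn1: all n.-unity_root r by apply/allP=> z; rewrite -root_prod_XsubC -Dp.
have sz_r: (n < (size r).+1)%N.
  by rewrite -(size_prod_XsubC r id) -Dp size_XnsubC.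
have [|z] := hasP (has_prim_root n_gt0 rn1 _ sz_r); last by exists z.
by rewrite -separable_prod_XsubC -Dp separable_Xn_sub_1.
Qed.

Section Roots.
Variable K : fieldType.
Hypothesis hchar : (2 \in [pchar K])%N.
Variable m : nat.
Variable z : K.
Hypothesis hz : (m.*2.+1).-primitive_root z.

Lemma z_neq0 : z != 0.
Proof. by rewrite (prim_root_eq0 hz). Qed.

Lemma zexp_eq j k : (j < m.*2.+1)%N -> (k < m.*2.+1)%N -> z ^+ j = z ^+ k -> j = k.
Proof.
move=> hj hk /eqP; rewrite (eq_prim_root_expr hz) !modn_small //; by move/eqP.
Qed.

Lemma zexp_1 j : (0 < j)%N -> (j < m.*2.+1)%N -> z ^+ j != 1.
Proof.
move=> j0 hj; apply/eqP => e; have := zexp_eq hj (ltn0Sn _).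
by rewrite expr0 => /(_ e); lia.
Qed.

Definition rr (k : nat) : K := z ^+ k + (z ^+ k)^-1.

Lemma rr_neq0 k : (0 < k <= m)%N -> rr k != 0.
Proof.
move=> /andP[k0 km]; apply/eqP => e.
have zk0 : z ^+ k != 0 by rewrite expf_neq0 // z_neq0.
have : z ^+ (k * 2) = 1.
  have e2 : z ^+ k * rr k = 0 by rewrite e mulr0.
  rewrite /rr mulrDr divff // in e2.
  rewrite exprM expr2; apply/eqP; rewrite -subr_eq0 (GRing.oppr_pchar2 hchar).
  by rewrite e2.
by apply/eqP; apply: zexp_1; lia.
Qed.

Lemma rr_inj j k : (0 < j <= m)%N -> (0 < k <= m)%N -> rr j = rr k -> j = k.
Proof.
move=> /andP[j0 jm] /andP[k0 km] e.
have t0 : z ^+ j != 0 by rewrite expf_neq0 // z_neq0.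
have s0 : z ^+ k != 0 by rewrite expf_neq0 // z_neq0.
have : (z ^+ j - z ^+ k) * (z ^+ j * z ^+ k - 1) = 0.
  have -> : (z ^+ j - z ^+ k) * (z ^+ j * z ^+ k - 1) =
     z ^+ j * z ^+ k * (rr j - rr k) by rewrite /rr; field; rewrite t0 s0.
  by rewrite e subrr mulr0.
move/eqP; rewrite mulf_eq0 !subr_eq0 => /orP[/eqP|].
  by apply: zexp_eq; lia.
rewrite -exprD => /eqP e1; exfalso; move: e1; apply/eqP; apply: zexp_1; lia.
Qed.
End Roots.

Lemma map_cst (T : Type) (s : seq T) (x : nat) : [seq x | _ <- s] = nseq (size s) x.
Proof. by elim: s => //= y s ->. Qed.

Theorem part2 (K : closedFieldType) (hchar : 2%N \in [pchar K])
  (a : K) (ha : a != 0) (n : nat)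
  (hn1 : (1 < n)%N) (hodd : odd n) :
  ((forall d : K, is_critical_value (dickson n a) d <-> d = 0)
   /\ is_ram_mset (dickson n a) 0 (1%N :: nseq (n.-1)./2 2%N)
   /\ (forall c : K, (root (dickson n a) c /\ ram_index (dickson n a) c = 1%N)
                     <-> c = 0)).
Proof.
have n2 : n%:R = 1 :> K by rewrite -(GRing.natr_mod_pchar hchar) modn2 hodd.
have [m hn] : exists m, n = m.*2.+1.
  by exists n./2; have := odd_double_half n; rewrite hodd; lia.
have hm : (n.-1)./2 = m by rewrite hn /= doubleK.
rewrite hm; have m1 : (0 < m)%N by lia.
have hn0 : (0 < n)%N by lia.
have [b hb] : exists b, b ^+ 2 = a.
  have : size ('X^2 - a%:P) != 1%N by rewrite size_XnsubC.
  move/closed_rootP => [b]; rewrite rootE !hornerE subr_eq0 => /eqP hb.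
  by exists b.
have b0 : b != 0 by apply: contraNneq ha => b0; rewrite -hb b0 expr0n.
have [z hz] : exists z : K, n.-primitive_root z.
  by apply: prim_root_exists; rewrite // n2 oner_neq0.
rewrite hn in hz.
have z0 := z_neq0 hz.
pose rs := [seq b * rr z k | k <- iota 1 m].
have hx k : b * z ^+ k + a / (b * z ^+ k) = b * rr z k.
  have zk : z ^+ k != 0 by rewrite expf_neq0.
  by rewrite /rr -hb; field; rewrite zk b0.
have rootD k : root (dickson n a) (b * rr z k).
  have zk : b * z ^+ k != 0 by rewrite mulf_neq0 // expf_neq0.
  rewrite rootE -hx D_eval //.
  have xn : (b * z ^+ k) ^+ n = b ^+ n.
    by rewrite exprMn exprAC hn (prim_expr_order hz) expr1n mulr1.
  rewrite expr_div_n xn -hb -exprM mulnC exprM expr2 mulfK ?expf_neq0 //.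
  by rewrite (GRing.addrr_pchar2 hchar).
have Dsq : dickson n a = 'X * gpol b m ^+ 2 by rewrite hn (D_sq hchar hb).
have [gs gm] := gpol_size hchar b m.
have rootg k : (0 < k <= m)%N -> root (gpol b m) (b * rr z k).
  move=> hk; have := rootD k; rewrite Dsq rootM rootX mulf_eq0 (negbTE b0).
  rewrite (negbTE (rr_neq0 hchar hz hk)) /= rootE hornerE expf_eq0 /=.
  by rewrite -rootE.
have urs : uniq rs.
  rewrite map_inj_in_uniq ?iota_uniq // => j k; rewrite !mem_iota => hj hk.
  by move/(mulfI b0)/(rr_inj hchar hz); apply; lia.
have rs0 : 0 \notin rs.
  apply/mapP => -[k]; rewrite mem_iota => hk /esym/eqP.
  by rewrite mulf_eq0 (negbTE b0) (negbTE (rr_neq0 hchar hz _)) //; lia.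
have srs : size rs = m by rewrite size_map size_iota.
have Pfac : gpol b m = \prod_(y <- rs) ('X - y%:P).
  have ar : all (root (gpol b m)) rs.
    apply/allP => y /mapP[k]; rewrite mem_iota => hk ->; apply: rootg; lia.
  have ur : uniq_roots rs by rewrite uniq_rootsE.
  have [q hq] := uniq_roots_prod_XsubC ar ur.
  have P0 : \prod_(y <- rs) ('X - y%:P) != 0 by rewrite monic_neq0 // monic_prod_XsubC.
  have q0 : q != 0 by apply: contra_eq_neq hq => ->; rewrite mul0r -size_poly_eq0 gs.
  have : size q == 1%N.
    move: gs; rewrite hq size_mul // size_prod_XsubC srs.
    by rewrite addnS /= => e; rewrite -(eqn_add2r m) e add1n.
  case/size_poly1P => c c0 qc.
  move: gm; rewrite hq qc mul_polyC monicE lead_coefZ.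
  by rewrite (monicP (monic_prod_XsubC _ _ _)) mulr1 => /eqP ->; rewrite scale1r.
have Dfac : dickson n a = \prod_(y <- 0 :: rs ++ rs) ('X - y%:P).
  by rewrite Dsq Pfac big_cons big_cat /= polyC0 subr0 expr2.
have cnt c : count_mem c (0 :: rs ++ rs) = ((c == 0%R) + 2 * (c \in rs))%N.
  rewrite /= count_cat count_uniq_mem // eq_sym.
by rewrite mul2n addnn.
have dD : (dickson n a)^`() = gpol b m ^+ 2.
  have hP : (2 \in [pchar {poly K}])%N by rewrite pchar_poly.
  rewrite Dsq derivM derivX mul1r [in X in _ + X]expr2 derivM.
  by rewrite [(gpol b m)^`() * _]mulrC (GRing.addrr_pchar2 hP) mulr0 addr0.
have Dval c : root (gpol b m) c -> (dickson n a).[c] = 0.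
  by move=> /rootP gc; rewrite Dsq hornerM horner_exp gc expr0n mulr0.
split; [|split].
- move=> d; split.
  + case=> c [hc <-]; apply: Dval; move: hc; rewrite dD horner_exp => /eqP.
    by rewrite expf_eq0 /= => /eqP /rootP.
  + move=> ->; have : size (gpol b m) != 1%N by rewrite gs; lia.
    move/closed_rootP => [c hc]; exists c; split; last exact: Dval.
    by rewrite dD horner_exp (rootP hc) expr0n.
- exists (0 :: rs); split.
  + by rewrite /= rs0 urs.
  + by move=> c; rewrite polyC0 subr0 Dfac root_prod_XsubC !inE mem_cat orbb.
  + rewrite polyC0 subr0 Dfac /= mu_prod_XsubC cnt eqxx (negbTE rs0) /=.
    have -> : [seq mup c (\prod_(y <- 0 :: rs ++ rs) ('X - y%:P)) | c <- rs] = nseq m 2%N.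
      rewrite -srs -map_cst; apply/eq_in_map => c hc.
      rewrite mu_prod_XsubC cnt hc.
      by have /negbTE -> : c != 0 by apply: contraNneq rs0 => <-.
    by [].
- move=> c; split.
  + case=> hr; rewrite /ram_index (rootP hr) polyC0 subr0 Dfac mu_prod_XsubC cnt.
    case: (eqVneq c 0) => // c0; move: hr.
    by rewrite Dfac root_prod_XsubC inE mem_cat orbb (negbTE c0) /= => ->.
  + move=> ->; have r0 : root (dickson n a) 0 by rewrite Dfac root_prod_XsubC mem_head.
    split => //; rewrite /ram_index (rootP r0) polyC0 subr0 Dfac mu_prod_XsubC cnt.
    by rewrite eqxx (negbTE rs0).
Qed.

Theorem part1 (K : closedFieldType) (hchar : 2%N \in [pchar K])
  (n : nat) (hn1 : (1 < n)%N) (hodd : odd n) :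
  ((forall d : K, is_critical_value ('X^n : {poly K}) d <-> d = 0)
   /\ is_ram_mset ('X^n : {poly K}) 0 [:: n]
   /\ (forall c : K, root ('X^n : {poly K}) c <-> c = 0)).
Proof.
have n2 : n%:R = 1 :> K by rewrite -(GRing.natr_mod_pchar hchar) modn2 hodd.
have hn0 : (n == 0)%N = false by lia.
have hn0' : (n.-1 == 0)%N = false by lia.
have hnp : (0 < n)%N by lia.
split; [|split].
- move=> d; split.
  + case=> c [hc <-]; move: hc.
    rewrite derivXn hornerMn hornerXn -mulr_natl n2 mul1r => /eqP.
    by rewrite expf_eq0 => /andP[_ /eqP ->]; rewrite hornerXn expr0n hn0.
  + move=> ->; exists 0.
    by rewrite derivXn hornerMn !hornerXn !expr0n hn0 hn0' mul0rn.
- exists [:: 0]; split => //.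
  + by move=> c; rewrite polyC0 subr0 inE rootE hornerXn expf_eq0 hnp.
  + have -> : ('X^n - 0%:P : {poly K}) = ('X - 0%:P) ^+ n by rewrite !polyC0 !subr0.
    by rewrite /= mup_XsubCX eqxx.
- move=> c; rewrite rootE hornerXn expf_eq0 hnp /=.
  by split => [/eqP //| ->]; rewrite eqxx.
Qed.

Theorem lemma2p19 (K : closedFieldType) (hchar : 2%N \in [pchar K])
  (halg : algebraic_over_F2 K) (a : K) (ha : a != 0) (n : nat)
  (hn1 : (1 < n)%N) (hodd : odd n) :
  ((forall d : K, is_critical_value ('X^n : {poly K}) d <-> d = 0)
   /\ is_ram_mset ('X^n : {poly K}) 0 [:: n]
   /\ (forall c : K, root ('X^n : {poly K}) c <-> c = 0))
  /\
  ((forall d : K, is_critical_value (dickson n a) d <-> d = 0)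
   /\ is_ram_mset (dickson n a) 0 (1%N :: nseq (n.-1)./2 2%N)
   /\ (forall c : K, (root (dickson n a) c /\ ram_index (dickson n a) c = 1%N)
                     <-> c = 0)).
Proof.
split; [exact: part1 | exact: part2].
Qed.
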